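(* Let $\mathcal X$ be finite with $N=|\mathcal X|\ge2$, let $0<c<1/N$ and $\varepsilon\ge\log\frac{2}{Nc}$. Then for every convex $f:(0,\infty)\to\mathbb R$ with $f(1)=0$ that is twice continuously differentiable with $f''(1)>0$, $$\sup_{K\in\mathcal M(\varepsilon,c)}\eta_f(K)=1.$$
   Context: For such $f$ and distributions $P\ll Q$ on a finite set, $D_f(P\|Q)=\sum_y Q(y)f\big(P(y)/Q(y)\big)$. For a kernel $K$ (row-stochastic matrix with entries $K_{Y|X=x}(y)$, $(K\circ P_X)(y)=\sum_xK_{Y|X=x}(y)P_X(x)$), $\eta_f(K)=\sup\frac{D_f(K\circ P_X\|K\circ Q_X)}{D_f(P_X\|Q_X)}$, the supremum over pairs of distributions on $\mathcal X$ with $0<D_f(P_X\|Q_X)<\infty$. PML: $\ell_{K\times P_X}(X\to y)=\log\frac{\max_x K_{Y|X=x}(y)}{(K\circ P_X)(y)}$ for full-support $P_X$ and $(K\circ P_X)(y)>0$. $\mathcal Q_{\mathcal X}(c)=\{P_X:\min_xP_X(x)\ge c\}$; $C(K,\mathcal P)=\sup_{P_X\in\mathcal P}\sup_{y:(K\circ P_X)(y)>0}\ell_{K\times P_X}(X\to y)$; $\mathcal M(\varepsilon,c)$ is the set of kernels from $\mathcal X$ to any finite output set with $C(K,\mathcal Q_{\mathcal X}(c))\le\varepsilon$. *)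

(* Defs.v *)
From HB Require Import structures.
From mathcomp Require Import all_boot all_order all_algebra.
From mathcomp Require Import all_classical all_reals all_analysis.
Set Implicit Arguments. Unset Strict Implicit. Unset Printing Implicit Defensive.
Import Order.TTheory GRing.Theory Num.Theory.
Import numFieldNormedType.Exports.
Local Open Scope classical_set_scope.
Local Open Scope ring_scope.

Section Defs.
Variable R : realType.

Definition is_dist (T : finType) (P : T -> R) : Prop :=
  (forall t, 0 <= P t) /\ \sum_(t : T) P t = 1.

Definition is_kernel (X Y : finType) (K : X -> Y -> R) : Prop :=
  forall x, is_dist (K x).

Definition push (X Y : finType) (K : X -> Y -> R) (P : X -> R) : Y -> R :=
  fun y => \sum_(x : X) K x y * P x.

Definition abs_cont (T : finType) (P Q : T -> R) : Prop :=
  forall t, Q t = 0 -> P t = 0.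

(* f(0) := lim_{t -> 0+} f t, in the extended reals (f is only given on (0,oo)) *)
Definition f_at0 (f : R -> R) : \bar R :=
  lim ((fun t => (f t)%:E) @ 0^'+).

Definition Df (f : R -> R) (T : finType) (P Q : T -> R) : \bar R :=
  (\sum_(t : T | Q t != 0%R)
     (if P t == 0%R then (Q t)%:E * f_at0 f else (Q t * f (P t / Q t))%:E))%E.

Definition eta_f (f : R -> R) (X Y : finType) (K : X -> Y -> R) : \bar R :=
  ereal_sup [set r : \bar R | exists (P Q : X -> R),
    [/\ is_dist P /\ is_dist Q, abs_cont P Q,
        (0 < Df f P Q)%E, (Df f P Q < +oo)%E &
        r = (Df f (push K P) (push K Q) * ((fine (Df f P Q))^-1)%:E)%E]].

Definition kmax (X Y : finType) (K : X -> Y -> R) (y : Y) : R :=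
  \big[Num.max/0]_(x : X) K x y.

Definition pml (X Y : finType) (K : X -> Y -> R) (P : X -> R) (y : Y) : R :=
  ln (kmax K y / push K P y).

Definition Qc (X : finType) (c : R) : set (X -> R) :=
  [set P | is_dist P /\ forall x, c <= P x].

Definition Cleak (X Y : finType) (K : X -> Y -> R) (Pset : set (X -> R)) : \bar R :=
  ereal_sup [set r : \bar R | exists P y,
    [/\ Pset P, 0 < push K P y & r = (pml K P y)%:E]].

Definition in_M (X Y : finType) (eps c : R) (K : X -> Y -> R) : Prop :=
  is_kernel K /\ (Cleak K (@Qc X c) <= eps%:E)%E.

Definition convex_pos (f : R -> R) : Prop :=
  forall x y t, 0 < x -> 0 < y -> 0 <= t -> t <= 1 ->
    f (t * x + (1 - t) * y) <= t * f x + (1 - t) * f y.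

Definition C2_pos (f : R -> R) : Prop :=
  (forall x, 0 < x -> derivable f x 1) /\
  (forall x, 0 < x -> derivable (derive1 f) x 1) /\
  (forall x, 0 < x -> {for x, continuous (derive1 (derive1 f))}).

End Defs.

(* Main.v *)
Require Import Defs.
From HB Require Import structures.
From mathcomp Require Import all_boot all_order all_algebra.
From mathcomp Require Import all_classical all_reals all_analysis.
From mathcomp Require Import perm.
From mathcomp Require Import ring lra.
Import Order.TTheory GRing.Theory Num.Theory.
Import numFieldNormedType.Exports.
Local Open Scope classical_set_scope.
Local Open Scope ring_scope.

Lemma tangent {R : realType} {f : R -> R} {m s : R} :
  convex_pos f -> derivable f m 1 -> 0 < m -> 0 < s ->
  f m + derive1 f m * (s - m) <= f s.
Proof.
move=> cvx dm m0 s0.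
have df : differentiable f m by apply/derivable1_diffP.
set v := s - m.
have dv : derivable f m v by apply: diff_derivable.
have Dv : 'D_v f m = v * derive1 f m.
  by rewrite deriveE // derive1E' // -[X in 'd f m X]mulr1 -[v * 1]/(v *: (1:R^o)) linearZ.
have cv := cvg_dnbhs_at_right dv.
rewrite -/(derive f m v) Dv in cv.
rewrite -lerBrDl mulrC.
apply: (cvgr_to_le cv).
near=> t.
have t0 : 0 < t by near: t; exact: nbhs_right_gt.
have t1 : t < 1 by near: t; exact: nbhs_right_lt.
rewrite /= ler_pdivrMl // -[X in f X](_ : t * s + (1 - t) * m = _); last first.
  by rewrite /v; rewrite -[t *: (s - m)]/(t * (s - m)); ring.
have := cvx s m t s0 m0 (ltW t0) (ltW t1).
lra.
Unshelve. all: by end_near. Qed.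

Lemma EFin_cvg_aux (R : realType) (h : R -> R) (a : R) :
  h x @[x --> (0:R)^'+] --> a -> (h x)%:E @[x --> (0:R)^'+] --> a%:E.
Proof.
move=> ha; apply: cvg_EFin; first by near=> x.
exact: ha.
Unshelve. all: by end_near. Qed.

Lemma fat0_cvg (R : realType) (f : R -> R) (b : R) :
  convex_pos f -> (forall x, 0 < x -> derivable f x 1) ->
  (f t + b * t)%:E @[t --> (0:R)^'+] --> f_at0 f.
Proof.
move=> cvx df.
set a := derive1 f 1.
pose g t := (f t - a * t)%:E.
have ni : {in `]0, 1[ &, nonincreasing_fun g}.
  move=> x y; rewrite !in_itv /= => /andP[x0 x1] /andP[y0 y1] xy.
  rewrite /g lee_fin.
  have h1 := tangent cvx (df y y0) y0 x0.
  have h2 := tangent cvx (df y y0) y0 ltr01.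
  have h3 := tangent cvx (df 1 ltr01) ltr01 y0.
  have hd : derive1 f y <= a.
    have : (derive1 f y - a) * (1 - y) <= 0 by rewrite /a in h3 *; nra.
    by rewrite pmulr_lle0 ?subr_gt0 // subr_le0.
  rewrite /a in hd *; nra.
have cg := @nonincreasing_at_right_cvge R g 0 (BLeft 1) ltac:(by rewrite bnd_simp) ni.
set G := ereal_sup _ in cg.
have H c : (f t + c * t)%:E @[t --> (0:R)^'+] --> G + 0%:E.
  have -> : (fun t => (f t + c * t)%:E) = g \+ (fun t => ((a + c) * t)%:E).
    by apply/funext => t; rewrite /g /= -EFinD; congr (_%:E); ring.
  apply: cvgeD; first exact: fin_num_adde_defl.
    exact: cg.
  apply: EFin_cvg_aux.
  rewrite -[X in _ --> X](mulr0 (a + c)).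
  apply: cvg_at_right_filter; apply: cvgMr; exact: cvg_id.
suff -> : f_at0 f = G + 0%:E by apply: H.
rewrite /f_at0; apply: cvg_lim => //.
have E : (fun t => (f t + 0 * t)%:E) = (fun t => (f t)%:E).
  by apply/funext => t; rewrite mul0r addr0.
by have := H 0; rewrite E.
Qed.

Lemma fat0_bound {R : realType} {f : R -> R} {l m : R} :
  convex_pos f -> (forall x, 0 < x -> derivable f x 1) ->
  f_at0 f = l%:E -> 0 < m -> f m - derive1 f m * m <= l.
Proof.
move=> cvx df fl m0.
have := @fat0_cvg R f (- derive1 f m) cvx df; rewrite fl => /fine_cvgP[_ cv].
apply: (cvgr_to_ge cv); near=> t.
have t0 : 0 < t by near: t; exact: nbhs_right_gt.
have := tangent cvx (df m m0) m0 t0.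
rewrite /=; nra.
Unshelve. all: by end_near. Qed.

Definition tin {R : realType} (f : R -> R) (l p q : R) :=
  if p == 0 then q * l else q * f (p / q).

Lemma sum_Qnz {R : realType} {X : finType} (K P Q : X -> R) :
  abs_cont P Q ->
  \sum_(x | Q x != 0) K x * Q x = \sum_x K x * Q x /\
  \sum_(x | Q x != 0) K x * P x = \sum_x K x * P x.
Proof.
move=> ac; split; rewrite [RHS](bigID (fun x => Q x != 0)) /= [X in _ = _ + X]big1 ?addr0 //.
  by move=> x /negPn/eqP ->; rewrite mulr0.
by move=> x /negPn/eqP /ac ->; rewrite mulr0.
Qed.

Lemma jensen_y {R : realType} {X : finType} (f : R -> R) (l : R) (K P Q : X -> R) :
  convex_pos f -> (forall x, 0 < x -> derivable f x 1) ->
  (forall x, 0 <= K x) -> (forall x, 0 <= P x) -> (forall x, 0 <= Q x) ->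
  abs_cont P Q ->
  ((forall m, 0 < m -> f m - derive1 f m * m <= l) \/ (forall x, Q x != 0 -> P x != 0)) ->
  0 < \sum_x K x * Q x ->
  tin f l (\sum_x K x * P x) (\sum_x K x * Q x) <=
    \sum_(x | Q x != 0) K x * tin f l (P x) (Q x).
Proof.
move=> cvx df K0 P0 Q0 ac H kq0.
have [SQ SP] := sum_Qnz K P Q ac.
set kp := \sum_x K x * P x in SP *; set kq := \sum_x K x * Q x in SQ kq0 *.
rewrite /tin; case: ifPn => [/eqP kp0|kpn0].
  rewrite -SQ mulr_suml le_eqVlt; apply/orP; left; apply/eqP/eq_bigr => x Qx.
  have : K x * P x = 0.
    by apply: (@psumr_eq0P _ _ predT (fun i => K i * P i) (fun i _ => mulr_ge0 (K0 i) (P0 i)) kp0).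
  move/eqP; rewrite mulf_eq0 => /orP[/eqP -> | /eqP ->]; first by rewrite !mul0r.
  by rewrite eqxx mulrA.
have kp0 : 0 < kp by rewrite lt_def kpn0 sumr_ge0 // => i _; rewrite mulr_ge0.
set m := kp / kq.
have m0 : 0 < m by rewrite divr_gt0.
set d := derive1 f m.
apply: (@le_trans _ _ (\sum_(x | Q x != 0) (f m * (K x * Q x) + (d * (K x * P x) - d * m * (K x * Q x))))).
  rewrite big_split /= sumrB -!mulr_sumr SQ SP.
  have -> : d * m * kq = d * kp by rewrite /m -mulrA divfK // gt_eqF.
  by rewrite subrr addr0 mulrC.
apply: ler_sum => x Qx.
have Qx0 : 0 < Q x by rewrite lt_def Qx Q0.
have -> : f m * (K x * Q x) + (d * (K x * P x) - d * m * (K x * Q x)) =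
   K x * (Q x * f m + d * (P x - m * Q x)) by ring.
apply: ler_wpM2l => //.
case: ifPn => [/eqP Px0|Pxn0].
  case: H => [H|H]; last by move: (H x Qx); rewrite Px0 eqxx.
  have := H m m0; rewrite -/d Px0 => hm.
  have : Q x * (f m - d * m) <= Q x * l by rewrite ler_wpM2l // ltW.
  lra.
have Px : 0 < P x by rewrite lt_def Pxn0 P0.
have := tangent cvx (df m m0) m0 (divr_gt0 Px Qx0); rewrite -/d => ht.
have : Q x * (f m + d * (P x / Q x - m)) <= Q x * f (P x / Q x) by rewrite ler_wpM2l // ltW.
have -> : Q x * (f m + d * (P x / Q x - m)) = Q x * f m + d * (P x - m * Q x).
  by field; rewrite gt_eqF.
done.
Qed.

Lemma dpi_sum {R : realType} {X Y : finType} (f : R -> R) (l : R)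
  (K : X -> Y -> R) (P Q : X -> R) :
  convex_pos f -> (forall x, 0 < x -> derivable f x 1) ->
  is_kernel K -> (forall x, 0 <= P x) -> (forall x, 0 <= Q x) ->
  abs_cont P Q ->
  ((forall m, 0 < m -> f m - derive1 f m * m <= l) \/ (forall x, Q x != 0 -> P x != 0)) ->
  \sum_(y | push K Q y != 0) tin f l (push K P y) (push K Q y) <=
  \sum_(x | Q x != 0) tin f l (P x) (Q x).
Proof.
move=> cvx df HK P0 Q0 ac H.
have K0 x y : 0 <= K x y by case: (HK x) => + _; apply.
have K1 x : \sum_y K x y = 1 by case: (HK x).
apply: (@le_trans _ _ (\sum_y \sum_(x | Q x != 0) K x y * tin f l (P x) (Q x))).
  rewrite [X in _ <= X](bigID (fun y => push K Q y != 0)) /= [X in _ <= _ + X]big1 ?addr0.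
    apply: ler_sum => y Hy.
    have Hp : 0 < push K Q y.
      by rewrite lt_def Hy /push sumr_ge0 // => i _; rewrite mulr_ge0.
    by rewrite /push in Hp *; apply: jensen_y.
  move=> y /negPn/eqP Hy; apply: big1 => x Qx.
  have : K x y * Q x = 0.
    by apply: (@psumr_eq0P _ _ predT (fun i => K i y * Q i) (fun i _ => mulr_ge0 (K0 i y) (Q0 i)) Hy).
  by move/eqP; rewrite mulf_eq0 (negPf Qx) orbF => /eqP ->; rewrite mul0r.
rewrite exchange_big /= le_eqVlt; apply/orP; left; apply/eqP/eq_bigr => x _.
by rewrite -mulr_suml K1 mul1r.
Qed.

Lemma Df_repr {R : realType} {T : finType} (f : R -> R) (l : R) (P Q : T -> R) :
  (f_at0 f = l%:E \/ forall t, Q t != 0 -> P t != 0) ->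
  Df f P Q = (\sum_(t | Q t != 0) tin f l (P t) (Q t))%:E.
Proof.
move=> H; rewrite /Df -sumEFin; apply: eq_bigr => t Qt; rewrite /tin.
case: ifPn => // /eqP Pt; case: H => [-> //|H].
by move: (H t Qt); rewrite Pt eqxx.
Qed.

Lemma Df_noinf {R : realType} {T : finType} (f : R -> R) (P Q : T -> R) :
  (forall t, 0 <= Q t) -> f_at0 f \isn't a fin_num ->
  (0 < Df f P Q)%E -> (Df f P Q < +oo)%E -> forall t, Q t != 0 -> P t != 0.
Proof.
move=> Q0 fin D0 Doo t Qt; apply/negP => /eqP Pt.
have Qp : 0 < Q t by rewrite lt_def Qt Q0.
move: fin D0 Doo; rewrite /Df; case E: (f_at0 f) => [r| |] //= _.
  move=> _; rewrite lt_neqAle => /andP[/negP + _]; apply.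
  apply/eqP/esum_eqyP.
    move=> i Qi; case: ifPn => _ //; rewrite gt0_muley //.
    by rewrite lte_fin lt_def Qi Q0.
  exists t; rewrite Pt eqxx gt0_muley ?lte_fin //; split => //.
move=> D0 _.
set S := (X in (_ < X)%E) in D0.
have : S = -oo%E.
  apply/esum_eqNyP.
  exists t; rewrite Pt eqxx gt0_muleNy ?lte_fin //; split => //.
by move=> h; rewrite h in D0.
Qed.

Lemma push_nz {R : realType} {X Y : finType} (K : X -> Y -> R) (P Q : X -> R) :
  is_kernel K -> (forall x, 0 <= P x) -> (forall x, 0 <= Q x) ->
  (forall x, Q x != 0 -> P x != 0) -> forall y, push K Q y != 0 -> push K P y != 0.
Proof.
move=> HK P0 Q0 H y Hy.
have K0 x : 0 <= K x y by case: (HK x) => + _; apply.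
have [x /andP[_ Hx]] := psumr_neq0P (P := predT) (F := fun x => K x y * Q x)
   (fun i _ => mulr_ge0 (K0 i) (Q0 i)) (elimN eqP Hy).
rewrite /push psumr_neq0 //; last by move=> i _; rewrite mulr_ge0.
apply/hasP; exists x; first exact: mem_index_enum.
have Qx : Q x != 0 by apply: contraTneq Hx => ->; rewrite mulr0 ltxx.
have Kx : K x y != 0 by apply: contraTneq Hx => ->; rewrite mul0r ltxx.
by rewrite /= mulr_gt0 // lt_def ?Kx ?K0 ?H ?P0.
Qed.

Lemma eta_le1 {R : realType} {X Y : finType} (f : R -> R) (K : X -> Y -> R) :
  convex_pos f -> (forall x, 0 < x -> derivable f x 1) -> is_kernel K ->
  (eta_f f K <= 1)%E.
Proof.
move=> cvx df HK; apply: ge_ereal_sup => r [P [Q [[[P0 _] [Q0 _]] ac D0 Doo ->]]].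
have KP0 y : 0 <= push K P y by rewrite /push sumr_ge0 // => i _; rewrite mulr_ge0 //; case: (HK i) => + _; apply.
have KQ0 y : 0 <= push K Q y by rewrite /push sumr_ge0 // => i _; rewrite mulr_ge0 //; case: (HK i) => + _; apply.
have [l [Hin Hout Hd]] : exists l,
   [/\ Df f P Q = (\sum_(t | Q t != 0) tin f l (P t) (Q t))%:E,
       Df f (push K P) (push K Q) = (\sum_(t | push K Q t != 0) tin f l (push K P t) (push K Q t))%:E &
       ((forall m, 0 < m -> f m - derive1 f m * m <= l) \/ (forall x, Q x != 0 -> P x != 0))].
  case fin: (f_at0 f \is a fin_num).
    exists (fine (f_at0 f)); have E : f_at0 f = (fine (f_at0 f))%:E by rewrite fineK.
    split; first (by apply: Df_repr; left); first (by apply: Df_repr; left).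
    by left => m m0; apply: (fat0_bound cvx df E m0).
  have nz := Df_noinf f P Q Q0 (negbT fin) D0 Doo.
  exists 0; split; first (by apply: Df_repr; right); last by right.
  by apply: Df_repr; right; apply: push_nz.
have le := dpi_sum f l K P Q cvx df HK P0 Q0 ac Hd.
rewrite Hin in D0 *; rewrite Hout /= -EFinM lee_fin.
rewrite lte_fin in D0.
by rewrite ler_pdivrMr // mul1r.
Qed.

Lemma exists_pos {R : realType} (f : R -> R) :
  convex_pos f -> f 1 = 0 -> C2_pos f -> 0 < derive1 (derive1 f) 1 ->
  exists u : R, [/\ 0 < u, u < 1 & 0 < f (1 + u) + f (1 - u)].
Proof.
move=> cvx f1 [df [ddf _]] pos.
have cv := cvg_dnbhs_at_right (ddf 1 ltr01).
rewrite -/(derive (derive1 f) 1 1) -derive1E in cv.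
move: (cv) => /cvgr_gt/(_ 0 pos) near0.
have : \forall h \near (0:R)^'+, [/\ 0 < h, h < 1/2 &
    0 < h^-1 *: ((derive1 f \o shift 1) (h *: 1) - derive1 f 1)].
  near=> h; split.
  - by near: h; exact: nbhs_right_gt.
  - by near: h; apply: nbhs_right_lt; rewrite divr_gt0.
  - by near: h; exact: near0.
move=> /filter_ex [h [h0 h2 hq]].
move: hq; rewrite /= -[h%:A]/(h * 1) mulr1 => hq.
have dh : derive1 f 1 < derive1 f (h + 1).
  by move: hq; rewrite pmulr_rgt0 ?invr_gt0 // subr_gt0.
exists (2 * h); split.
- by rewrite mulr_gt0.
- lra.
have p1 : 0 < h + 1 by lra.
have p2 : 0 < 1 + 2 * h by lra.
have p3 : 0 < 1 - 2 * h by lra.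
have t1 := tangent cvx (df (h + 1) p1) p1 p2.
have t2 := tangent cvx (df 1 ltr01) ltr01 p1.
have t3 := tangent cvx (df 1 ltr01) ltr01 p3.
have pp : 0 < (derive1 f (h + 1) - derive1 f 1) * h by rewrite mulr_gt0 // subr_gt0.
rewrite f1 in t2 t3.
nra.
Unshelve. all: by end_near. Qed.

Definition K2 {R : realType} {X : finType} (x1 x2 : X) (x : X) (b : bool) : R :=
  if x == x1 then (if b then 1 else 0) else if x == x2 then (if b then 0 else 1) else 1/2.

Lemma K2_kernel {R : realType} {X : finType} (x1 x2 : X) : is_kernel (@K2 R X x1 x2).
Proof.
move=> x; split.
  by move=> b; rewrite /K2; case: ifP => _; case: ifP => _; case: b => //.
rewrite big_bool /K2; case: ifP => _ /=; first by rewrite addr0.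
by case: ifP => _ /=; [rewrite add0r | field].
Qed.

Lemma K2_sum {R : realType} {X : finType} (x1 x2 : X) : x1 != x2 ->
  forall b, \sum_x @K2 R X x1 x2 x b = #|X|%:R / 2.
Proof.
move=> neq.
have neq' : x2 != x1 by rewrite eq_sym.
have sw : \sum_x @K2 R X x1 x2 x false = \sum_x @K2 R X x1 x2 x true.
  rewrite (reindex_inj (@perm_inj _ (tperm x1 x2))) /=.
  apply: eq_bigr => x _; rewrite /K2.
  case: (tpermP x1 x2 x) => [->|->|/eqP/negPf -> /eqP/negPf ->].
  - by rewrite !eqxx ?(negPf neq) ?(negPf neq').
  - by rewrite !eqxx ?(negPf neq) ?(negPf neq').
  - by [].
have tot : \sum_x @K2 R X x1 x2 x true + \sum_x @K2 R X x1 x2 x false = #|X|%:R.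
  rewrite -big_split /=.
  rewrite (eq_bigr (fun _ => 1)); first by rewrite sumr_const.
  by move=> x _; have [_ H] := @K2_kernel R X x1 x2 x; rewrite big_bool in H.
rewrite sw in tot; move=> b; case: b; rewrite ?sw; lra.
Qed.

Lemma K2_kmax {R : realType} {X : finType} (x1 x2 : X) (y : bool) : x1 != x2 ->
  kmax (@K2 R X x1 x2) y = 1.
Proof.
move=> neq; have neq' : x2 != x1 by rewrite eq_sym.
apply/le_anti/andP; split.
  apply: bigmax_le => // x _; rewrite /K2.
  by case: ifP => _; case: ifP => _; case: y => //; lra.
apply: (le_trans _ (le_bigmax _ _ (if y then x1 else x2))).
by rewrite /K2; case: y; rewrite !eqxx ?(negPf neq').
Qed.

Lemma K2_leak {R : realType} {X : finType} (x1 x2 : X) (c eps : R) :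
  x1 != x2 -> 0 < c -> ln (2 / (#|X|%:R * c)) <= eps ->
  (Cleak (@K2 R X x1 x2) (Qc c) <= eps%:E)%E.
Proof.
move=> neq c0 he; apply: ge_ereal_sup => r [P [y [[[P0 _] Pc] Py ->]]].
rewrite lee_fin /pml K2_kmax //.
have N0 : (0 : R) < #|X|%:R.
  by rewrite ltr0n; apply/card_gt0P; exists x1.
have hp : #|X|%:R / 2 * c <= push (@K2 R X x1 x2) P y.
  rewrite /push -(@K2_sum R X x1 x2 neq y) mulr_suml; apply: ler_sum => x _.
  by apply: ler_wpM2l => //; case: (@K2_kernel R X x1 x2 x) => + _; apply.
apply: le_trans he; rewrite ler_ln ?posrE ?divr_gt0 ?mulr_gt0 //.
have -> : 2 / (#|X|%:R * c) = (#|X|%:R / 2 * c)^-1.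
  by field; rewrite ?gt_eqF.
by rewrite div1r lef_pV2 ?posrE ?mulr_gt0 ?divr_gt0.
Qed.

Lemma sum2 {R : realType} {X : finType} {x1 x2 : X} {g : X -> R} : x1 != x2 ->
  (forall x, x != x1 -> x != x2 -> g x = 0) -> \sum_x g x = g x1 + g x2.
Proof.
move=> neq H; have neq' : x2 != x1 by rewrite eq_sym.
rewrite (bigD1 x1) //= (bigD1 x2) //= big1 ?addr0 // => x /andP[h1 h2]; exact: H.
Qed.

Definition pt2 {R : realType} {X : finType} (x1 x2 : X) (a b : R) (x : X) : R :=
  if x == x1 then a else if x == x2 then b else 0.

Lemma K2_eta_ge1 {R : realType} {X : finType} (f : R -> R) (x1 x2 : X) (u : R) :
  x1 != x2 -> 0 < u -> u < 1 -> 0 < f (1 + u) + f (1 - u) ->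
  (1 <= eta_f f (@K2 R X x1 x2))%E.
Proof.
move=> neq u0 u1 fpos; have neq' : x2 != x1 by rewrite eq_sym.
pose P : X -> R := pt2 x1 x2 ((1 + u) / 2) ((1 - u) / 2).
pose Q : X -> R := pt2 x1 x2 (1 / 2) (1 / 2).
have P1 : P x1 = (1 + u) / 2 by rewrite /P /pt2 eqxx.
have P2 : P x2 = (1 - u) / 2 by rewrite /P /pt2 eqxx (negPf neq').
have Q1 : Q x1 = 1 / 2 by rewrite /Q /pt2 eqxx.
have Q2 : Q x2 = 1 / 2 by rewrite /Q /pt2 eqxx (negPf neq').
have Poff x : x != x1 -> x != x2 -> P x = 0 by move=> /negPf h1 /negPf h2; rewrite /P /pt2 h1 h2.
have Qoff x : x != x1 -> x != x2 -> Q x = 0 by move=> /negPf h1 /negPf h2; rewrite /Q /pt2 h1 h2.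
have QP t : Q t != 0 -> P t != 0.
  rewrite /Q /P /pt2; case: ifP => _; first by move=> _; lra.
  by case: ifP => _ //; move=> _; lra.
have K1 b : @K2 R X x1 x2 x1 b = if b then 1 else 0 by rewrite /K2 eqxx.
have K2' b : @K2 R X x1 x2 x2 b = if b then 0 else 1 by rewrite /K2 eqxx (negPf neq').
have pushE (S : X -> R) : (forall x, x != x1 -> x != x2 -> S x = 0) ->
    push (@K2 R X x1 x2) S = fun b => if b then S x1 else S x2.
  move=> Soff; apply/funext => b.
  have Hoff : forall x, x != x1 -> x != x2 -> @K2 R X x1 x2 x b * S x = 0.
    by move=> x h1 h2; rewrite Soff ?mulr0.
  rewrite /push (sum2 neq Hoff).
  by rewrite K1 K2'; clear Hoff; case: b; rewrite ?mul1r ?mul0r ?addr0 ?add0r.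
have hh : (1 / 2 : R) != 0 by rewrite mulf_neq0 ?oner_eq0 ?invr_eq0 ?pnatr_eq0.
set V := tin f 0 (P x1) (Q x1) + tin f 0 (P x2) (Q x2).
have DPQ : Df f P Q = V%:E.
  have Hoff : forall x, x != x1 -> x != x2 -> (if Q x != 0 then tin f 0 (P x) (Q x) else 0) = 0.
    by move=> x h1 h2; rewrite Qoff // eqxx.
  rewrite (Df_repr f 0 P Q (or_intror QP)) big_mkcond /= (sum2 neq Hoff).
  by rewrite Q1 Q2 /V Q1 Q2 hh.
have DK : Df f (push (K2 x1 x2) P) (push (K2 x1 x2) Q) = V%:E.
  have QPk : forall y, push (K2 x1 x2) Q y != 0 -> push (K2 x1 x2) P y != 0.
    by rewrite (pushE P Poff) (pushE Q Qoff); case; apply: QP.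
  rewrite (Df_repr f 0 (push (K2 x1 x2) P) (push (K2 x1 x2) Q) (or_intror QPk)).
  rewrite (pushE P Poff) (pushE Q Qoff).
  by rewrite big_mkcond big_bool /= /V Q1 Q2 hh.
have Vpos : 0 < V.
  rewrite /V /tin P1 P2 Q1 Q2.
  have -> : ((1 + u) / 2 == 0) = false by apply/negbTE; lra.
  have -> : ((1 - u) / 2 == 0) = false by apply/negbTE; lra.
  have -> : (1 + u) / 2 / (1 / 2) = 1 + u by field.
  have -> : (1 - u) / 2 / (1 / 2) = 1 - u by field.
  lra.
apply: ereal_sup_ubound; exists P, Q; split.
- split; split.
  + by move=> t; rewrite /P /pt2; case: ifP => _; [|case: ifP => _]; lra.
  + by rewrite (sum2 neq Poff) P1 P2; field.
  + by move=> t; rewrite /Q /pt2; case: ifP => _; [|case: ifP => _]; lra.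
  + by rewrite (sum2 neq Qoff) Q1 Q2; field.
- move=> t; rewrite /P /Q /pt2; case: ifP => _; first lra.
  by case: ifP => _ //; lra.
- by rewrite DPQ lte_fin.
- by rewrite DPQ ltry.
- by rewrite DK DPQ /= -EFinM mulfV // gt_eqF.
Qed.

Theorem theorem2 (R : realType) (X : finType) (c eps : R) (f : R -> R) :
  (2 <= #|X|)%N -> 0 < c -> c < (#|X|%:R)^-1 ->
  ln (2 / (#|X|%:R * c)) <= eps ->
  convex_pos f -> f 1 = 0 -> C2_pos f -> 0 < derive1 (derive1 f) 1 ->
  ereal_sup [set e : \bar R | exists (Y : finType) (K : X -> Y -> R),
               in_M eps c K /\ e = eta_f f K] = 1%E.
Proof.
move=> N2 c0 cN heps cvx f1 C2 pos.
case: (C2) => df _.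
have [x1 [x2 neq]] : exists x1 x2 : X, x1 != x2.
  have : (0 < #|X|)%N by apply: leq_trans N2.
  move=> /card_gt0P [x1 _].
  have : (0 < #|predC1 x1|)%N.
    by rewrite cardC1; move: N2; case: (#|X|) => // [[|n]].
  by case/card_gt0P => x2; rewrite inE => h; exists x1, x2; rewrite eq_sym.
have [u [u0 u1 fu]] := exists_pos f cvx f1 C2 pos.
have eta1 : eta_f f (@K2 R X x1 x2) = 1%E.
  apply/le_anti/andP; split; first exact: (eta_le1 f _ cvx df (K2_kernel x1 x2)).
  exact: (K2_eta_ge1 f x1 x2 u neq u0 u1 fu).
apply/le_anti/andP; split.
  apply: ge_ereal_sup => e [Y [K [[HK _] ->]]]; exact: eta_le1.
apply: ereal_sup_ubound; exists bool, (@K2 R X x1 x2); split; last by rewrite eta1.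
split; [exact: K2_kernel | exact: K2_leak].
Qed.
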